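(* Let $A$ be a locally-complex Cayley--Dickson algebra and let $f(x)=x^n+a_{n-1}x^{n-1}+\dots+a_1x+a_0\in A[x]$ be monic with $n\ge 1$. Then every $r\in\mathrm{sn}(f)$ satisfies $|r|<R_1(f)=\sqrt{1+|a_{n-1}|^2+\dots+|a_1|^2+|a_0|^2}$, $|r|<R_2(f)=1+\max_{0\le k\le n-1}|a_k|$, and $|r|\le R_3(f)=\max\{1,\ |a_{n-1}|+\dots+|a_1|+|a_0|\}$.
   Context: Real Cayley--Dickson algebras: $A_0=\mathbb{R}$ with identity involution, $A_{k+1}=A_k\{\gamma_k\}=A_k\times A_k$ with product $(a,b)(c,d)=(ac+\gamma_k\bar d b,\ da+b\bar c)$ and involution $\overline{(a,b)}=(\bar a,-b)$. A real unital algebra is locally-complex if every non-real element generates a subalgebra isomorphic to $\mathbb{C}$ (for Cayley--Dickson algebras: all $\gamma_k=-1$ up to isomorphism). Trace $\mathrm{tr}(\lambda)=\lambda+\bar\lambda$, norm $\mathrm{n}(\lambda)=\bar\lambda\lambda$, $|\lambda|=\sqrt{\mathrm{n}(\lambda)}$ (the Euclidean norm); $\langle\cdot,\cdot\rangle$ the associated inner product. For $I$ with trace $0$ and norm $1$, $\mathbb{C}_I=\mathbb{R}+\mathbb{R}I\cong\mathbb{C}$ and $\pi_I$ the orthogonal projection onto it. $A[x]=A\otimes_{\mathbb{R}}\mathbb{R}[x]$ with central $x$; for $f(x)=\sum_k a_kx^k$, $f_I(x)=\sum_k\pi_I(a_k)x^k$. If $f_I$ is non-constant, $K_{\mathbb{C}_I}(f_I)$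 is the convex hull in $\mathbb{C}_I$ of the roots of $f_I$ in $\mathbb{C}_I$; otherwise $K_{\mathbb{C}_I}(f_I)=\mathbb{C}_I$. The Gauss--Lucas snail is $\mathrm{sn}(f)=\bigcup_I K_{\mathbb{C}_I}(f_I)$ over all $I$ with $\mathrm{tr}(I)=0$, $\mathrm{n}(I)=1$. *)

(* Defs.v *)
From mathcomp Require Import all_boot all_order all_algebra.
From mathcomp Require Import reals.
Set Implicit Arguments. Unset Strict Implicit. Unset Printing Implicit Defensive.
Import Order.TTheory GRing.Theory Num.Theory.
Local Open Scope ring_scope.

(* The locally-complex Cayley--Dickson algebra A_k over a real field R:
   A_0 = R, A_(k+1) = A_k x A_k with gamma_k = -1:
   (a,b)(c,d) = (ac - conj(d) b, d a + b conj(c)), conj (a,b) = (conj a, -b). *)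
Fixpoint cd (R : realType) (k : nat) : Type :=
  match k with 0 => (R : Type) | k'.+1 => (cd R k' * cd R k')%type end.

Fixpoint czero (R : realType) (k : nat) : cd R k :=
  match k as k0 return cd R k0 with 0 => (0 : R) | k'.+1 => (czero R k', czero R k') end.

Fixpoint cscale (R : realType) (k : nat) (t : R) : cd R k -> cd R k :=
  match k as k0 return cd R k0 -> cd R k0 with
  | 0 => fun x : R => t * x
  | k'.+1 => fun x => (cscale t x.1, cscale t x.2) end.

Fixpoint creal (R : realType) (k : nat) (t : R) : cd R k :=
  match k as k0 return cd R k0 with 0 => t | k'.+1 => (creal k' t, czero R k') end.

Definition cone (R : realType) (k : nat) : cd R k := creal k 1.

Fixpoint cadd (R : realType) (k : nat) : cd R k -> cd R k -> cd R k :=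
  match k as k0 return cd R k0 -> cd R k0 -> cd R k0 with
  | 0 => fun x y : R => x + y
  | k'.+1 => fun x y => (cadd x.1 y.1, cadd x.2 y.2) end.

Fixpoint copp (R : realType) (k : nat) : cd R k -> cd R k :=
  match k as k0 return cd R k0 -> cd R k0 with
  | 0 => fun x : R => - x
  | k'.+1 => fun x => (copp x.1, copp x.2) end.

Fixpoint cconj (R : realType) (k : nat) : cd R k -> cd R k :=
  match k as k0 return cd R k0 -> cd R k0 with
  | 0 => fun x : R => x
  | k'.+1 => fun x => (cconj x.1, copp x.2) end.

Fixpoint cmul (R : realType) (k : nat) : cd R k -> cd R k -> cd R k :=
  match k as k0 return cd R k0 -> cd R k0 -> cd R k0 with
  | 0 => fun x y : R => x * y
  | k'.+1 => fun x y =>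
      (cadd (cmul x.1 y.1) (copp (cmul (cconj y.2) x.2)),
       cadd (cmul y.2 x.1) (cmul x.2 (cconj y.1))) end.

(* the real coordinate ("real part") of an element; used to read off the
   real numbers n(lambda) = conj(lambda) lambda, which lie in R = R*1 *)
Fixpoint cre (R : realType) (k : nat) : cd R k -> R :=
  match k as k0 return cd R k0 -> R with
  | 0 => fun x : R => x
  | k'.+1 => fun x => cre x.1 end.

Definition ctr (R : realType) (k : nat) (x : cd R k) : cd R k := cadd x (cconj x).
Definition cn (R : realType) (k : nat) (x : cd R k) : cd R k := cmul (cconj x) x.
Definition cabs (R : realType) (k : nat) (x : cd R k) : R := Num.sqrt (cre (cn x)).
Definition cinner (R : realType) (k : nat) (x y : cd R k) : R :=
  (cre (cn (cadd x y)) - cre (cn x) - cre (cn y)) / 2.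

Definition imag_unit (R : realType) (k : nat) (I : cd R k) : Prop :=
  ctr I = czero R k /\ cn I = cone R k.

Definition inCI (R : realType) (k : nat) (I z : cd R k) : Prop :=
  exists x y : R, z = cadd (creal k x) (cscale y I).

(* orthogonal projection onto C_I (1, I is an orthonormal basis of C_I) *)
Definition piI (R : realType) (k : nat) (I a : cd R k) : cd R k :=
  cadd (cscale (cinner a (cone R k)) (cone R k)) (cscale (cinner a I) I).

Fixpoint cpow (R : realType) (k : nat) (z : cd R k) (j : nat) : cd R k :=
  if j is j'.+1 then cmul z (cpow z j') else cone R k.

Definition csum (R : realType) (k : nat) (s : seq (cd R k)) : cd R k :=
  foldr (@cadd R k) (czero R k) s.

(* polynomials in A[x] are coefficient lists [:: a_0; a_1; ...; a_d];
   evaluation at z (x central): sum_j a_j z^j *)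
Definition ceval (R : realType) (k : nat) (p : seq (cd R k)) (z : cd R k) : cd R k :=
  csum [seq cmul (nth (czero R k) p j) (cpow z j) | j <- iota 0 (size p)].

Definition polyI (R : realType) (k : nat) (I : cd R k) (p : seq (cd R k)) :=
  [seq piI I a | a <- p].

Definition nonconst (R : realType) (k : nat) (p : seq (cd R k)) : Prop :=
  exists2 j, (0 < j)%N & nth (czero R k) p j <> czero R k.

(* K_{C_I}(f_I): convex hull in C_I of the roots of f_I in C_I,
   or all of C_I if f_I is constant *)
Definition KCI (R : realType) (k : nat) (I : cd R k) (p : seq (cd R k)) (r : cd R k) : Prop :=
  let q := polyI I p in
  (nonconst q ->
    exists m (z : 'I_m -> cd R k) (t : 'I_m -> R),
      [/\ forall i, inCI I (z i) /\ ceval q (z i) = czero R k,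
          forall i, 0 <= t i,
          \sum_(i < m) t i = 1 &
          r = csum [seq cscale (t i) (z i) | i <- enum 'I_m]])
  /\ (~ nonconst q -> inCI I r).

Definition snail (R : realType) (k : nat) (p : seq (cd R k)) (r : cd R k) : Prop :=
  exists I, imag_unit I /\ KCI I p r.

(* Main.v *)
Require Import Defs.
From mathcomp Require Import all_boot all_order all_algebra reals.
From mathcomp.real_closed Require Import complex.
From mathcomp.algebra_tactics Require Import ring lra.
Import Order.TTheory GRing.Theory Num.Theory.
Local Open Scope ring_scope.
Set Implicit Arguments. Unset Strict Implicit. Unset Printing Implicit Defensive.

Section CD.
Variable R : realType.
Local Notation cd := (cd R).

Lemma caddA k (x y z : cd k) : cadd x (cadd y z) = cadd (cadd x y) z.
Proof. elim: k x y z => [|k IH] /= x y z; [exact: addrA| by rewrite !IH]. Qed.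
Lemma caddC k (x y : cd k) : cadd x y = cadd y x.
Proof. elim: k x y => [|k IH] /= x y; [exact: addrC| by rewrite IH (IH x.2)]. Qed.
Lemma cadd0 k (x : cd k) : cadd (czero R k) x = x.
Proof. elim: k x => [|k IH] /= x; [exact: add0r| by rewrite !IH; case: x]. Qed.
Lemma caddN k (x : cd k) : cadd x (copp x) = czero R k.
Proof. elim: k x => [|k IH] /= x; [exact: subrr| by rewrite !IH]. Qed.
Lemma copp_add k (x y : cd k) : copp (cadd x y) = cadd (copp x) (copp y).
Proof. elim: k x y => [|k IH] /= x y; [exact: opprD| by rewrite !IH]. Qed.
Lemma coppK k (x : cd k) : copp (copp x) = x.
Proof. elim: k x => [|k IH] /= x; [exact: opprK| by rewrite !IH; case: x]. Qed.
Lemma copp0 k : copp (czero R k) = czero R k.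
Proof. elim: k => [|k IH] /=; [exact: oppr0| by rewrite !IH]. Qed.
Lemma cconj_add k (x y : cd k) : cconj (cadd x y) = cadd (cconj x) (cconj y).
Proof. elim: k x y => [|k IH] /= x y; [by []| by rewrite IH copp_add]. Qed.
Lemma cconj_opp k (x : cd k) : cconj (copp x) = copp (cconj x).
Proof. elim: k x => [|k IH] /= x; [by []| by rewrite IH]. Qed.
Lemma cconj0 k : cconj (czero R k) = czero R k.
Proof. elim: k => [|k IH] /=; [by []| by rewrite IH copp0]. Qed.
Lemma cconj_real k (t : R) : cconj (creal k t) = creal k t.
Proof. elim: k => [|k IH] /=; [by []| by rewrite IH copp0]. Qed.
Lemma copp_scale k (t : R) (x : cd k) : copp (cscale t x) = cscale t (copp x).
Proof. elim: k x => [|k IH] /= x; [by rewrite mulrN| by rewrite !IH]. Qed.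
Lemma cconj_scale k (t : R) (x : cd k) : cconj (cscale t x) = cscale t (cconj x).
Proof. elim: k x => [|k IH] /= x; [by []| by rewrite IH copp_scale]. Qed.
Lemma cscale_add k (t : R) (x y : cd k) : cscale t (cadd x y) = cadd (cscale t x) (cscale t y).
Proof. elim: k x y => [|k IH] /= x y; [exact: mulrDr| by rewrite !IH]. Qed.
Lemma cscaleD k (s t : R) (x : cd k) : cscale (s + t) x = cadd (cscale s x) (cscale t x).
Proof. elim: k x => [|k IH] /= x; [exact: mulrDl| by rewrite !IH]. Qed.
Lemma cscaleM k (s t : R) (x : cd k) : cscale s (cscale t x) = cscale (s * t) x.
Proof. elim: k x => [|k IH] /= x; [exact: mulrA| by rewrite !IH]. Qed.
Lemma cscale1 k (x : cd k) : cscale 1 x = x.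
Proof. elim: k x => [|k IH] /= x; [exact: mul1r| by rewrite !IH; case: x]. Qed.
Lemma cscale0 k (x : cd k) : cscale 0 x = czero R k.
Proof. elim: k x => [|k IH] /= x; [exact: mul0r| by rewrite !IH]. Qed.
Lemma cscalez k (t : R) : cscale t (czero R k) = czero R k.
Proof. elim: k => [|k IH] /=; [exact: mulr0| by rewrite !IH]. Qed.
Lemma cscaleN k (t : R) (x : cd k) : cscale (- t) x = copp (cscale t x).
Proof. elim: k x => [|k IH] /= x; [exact: mulNr| by rewrite !IH]. Qed.
Lemma cscale_real k (s t : R) : cscale s (creal k t) = creal k (s * t).
Proof. elim: k => [|k IH] /=; [by []| by rewrite IH cscalez]. Qed.

Lemma cadd4 k (a b c d : cd k) : cadd (cadd a b) (cadd c d) = cadd (cadd a c) (cadd b d).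
Proof. by rewrite -!caddA (caddA b) (caddC b c) -caddA. Qed.
Lemma caddz k (x : cd k) : cadd x (czero R k) = x.
Proof. by rewrite caddC cadd0. Qed.
Lemma copp_m1 k (x : cd k) : copp x = cscale (-1) x.
Proof. elim: k x => [|k IH] /= x; [by rewrite mulN1r| by rewrite !IH]. Qed.

Lemma cmul_add k : (forall x y z : cd k, cmul (cadd x y) z = cadd (cmul x z) (cmul y z)) /\ (forall x y z : cd k, cmul z (cadd x y) = cadd (cmul z x) (cmul z y)).
Proof.
elim: k => [|k [IHl IHr]] /=; first by split=> x y z; [exact: mulrDl| exact: mulrDr].
split=> x y z /=.
  by rewrite IHl IHr IHr IHl copp_add; congr pair; rewrite [LHS]cadd4.
by rewrite !cconj_add IHl IHr IHr IHl copp_add; congr pair; rewrite [LHS]cadd4.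
Qed.
Lemma cmul_addl k (x y z : cd k) : cmul (cadd x y) z = cadd (cmul x z) (cmul y z).
Proof. exact: (cmul_add k).1. Qed.
Lemma cmul_addr k (x y z : cd k) : cmul z (cadd x y) = cadd (cmul z x) (cmul z y).
Proof. exact: (cmul_add k).2. Qed.

Lemma cmul_scale k (t : R) : (forall x y : cd k, cmul (cscale t x) y = cscale t (cmul x y)) /\ (forall x y : cd k, cmul x (cscale t y) = cscale t (cmul x y)).
Proof.
elim: k => [|k [IHl IHr]] /=; first by split=> x y /=; ring.
split=> x y /=.
  by rewrite IHl IHr IHr IHl !cscale_add copp_scale.
by rewrite !cconj_scale IHl IHr IHr IHl !cscale_add copp_scale.
Qed.
Lemma cmul_scalel k (t : R) (x y : cd k) : cmul (cscale t x) y = cscale t (cmul x y).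
Proof. exact: (cmul_scale k t).1. Qed.
Lemma cmul_scaler k (t : R) (x y : cd k) : cmul x (cscale t y) = cscale t (cmul x y).
Proof. exact: (cmul_scale k t).2. Qed.
Lemma cmul_oppl k (x y : cd k) : cmul (copp x) y = copp (cmul x y).
Proof. by rewrite (copp_m1 x) cmul_scalel copp_m1. Qed.
Lemma cmul_oppr k (x y : cd k) : cmul x (copp y) = copp (cmul x y).
Proof. by rewrite (copp_m1 y) cmul_scaler copp_m1. Qed.
Lemma cmul0l k (x : cd k) : cmul (czero R k) x = czero R k.
Proof. by rewrite -[X in cmul X _](cscale0 (czero R k)) cmul_scalel !cscale0. Qed.
Lemma cmul0r k (x : cd k) : cmul x (czero R k) = czero R k.
Proof. by rewrite -[X in cmul _ X](cscale0 (czero R k)) cmul_scaler !cscale0. Qed.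

Lemma cmul_real k (t : R) : (forall x : cd k, cmul (creal k t) x = cscale t x) /\ (forall x : cd k, cmul x (creal k t) = cscale t x).
Proof.
elim: k => [|k [IHl IHr]] /=; first by split=> x; [by []| exact: mulrC].
split=> x /=.
  by rewrite IHl IHr cmul0r cmul0l copp0 caddz caddz; case: x.
by rewrite cconj0 cconj_real !IHr !cmul0l copp0 caddz cadd0; case: x.
Qed.
Lemma cmul_reall k (t : R) (x : cd k) : cmul (creal k t) x = cscale t x.
Proof. exact: (cmul_real k t).1. Qed.
Lemma cmul_realr k (t : R) (x : cd k) : cmul x (creal k t) = cscale t x.
Proof. exact: (cmul_real k t).2. Qed.

Lemma cre_add k (x y : cd k) : cre (cadd x y) = cre x + cre y.
Proof. by elim: k x y => [|k IH] /= x y. Qed.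
Lemma cre_scale k (t : R) (x : cd k) : cre (cscale t x) = t * cre x.
Proof. by elim: k x => [|k IH] /= x. Qed.
Lemma cre_opp k (x : cd k) : cre (copp x) = - cre x.
Proof. by elim: k x => [|k IH] /= x. Qed.
Lemma cre_conj k (x : cd k) : cre (cconj x) = cre x.
Proof. by elim: k x => [|k IH] /= x. Qed.
Lemma cre_real k (t : R) : cre (creal k t) = t.
Proof. by elim: k => [|k IH] /=. Qed.
Lemma cre0 k : cre (czero R k) = 0.
Proof. by elim: k => [|k IH] /=. Qed.

Fixpoint cdot k : cd k -> cd k -> R :=
  match k as k0 return cd k0 -> cd k0 -> R with
  | 0 => fun x y : R => x * y
  | k'.+1 => fun x y => cdot x.1 y.1 + cdot x.2 y.2 end.

Lemma cdotC k (x y : cd k) : cdot x y = cdot y x.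
Proof. elim: k x y => [|k IH] /= x y; [exact: mulrC| by rewrite (IH x.1) (IH x.2)]. Qed.
Lemma cdot_addl k (x y z : cd k) : cdot (cadd x y) z = cdot x z + cdot y z.
Proof. elim: k x y z => [|k IH] /= x y z; [exact: mulrDl| by rewrite !IH addrACA]. Qed.
Lemma cdot_addr k (x y z : cd k) : cdot z (cadd x y) = cdot z x + cdot z y.
Proof. by rewrite !(cdotC z) cdot_addl. Qed.
Lemma cdot_scalel k (t : R) (x y : cd k) : cdot (cscale t x) y = t * cdot x y.
Proof. elim: k x y => [|k IH] /= x y; [by rewrite mulrA| by rewrite !IH mulrDr]. Qed.
Lemma cdot_scaler k (t : R) (x y : cd k) : cdot x (cscale t y) = t * cdot x y.
Proof. by rewrite !(cdotC x) cdot_scalel. Qed.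
Lemma cdot_oppl k (x y : cd k) : cdot (copp x) y = - cdot x y.
Proof. by rewrite copp_m1 cdot_scalel mulN1r. Qed.
Lemma cdot_oppr k (x y : cd k) : cdot x (copp y) = - cdot x y.
Proof. by rewrite cdotC cdot_oppl cdotC. Qed.
Lemma cdot_ge0 k (x : cd k) : 0 <= cdot x x.
Proof. elim: k x => [|k IH] /= x; [exact: mulr_ge0_le0 || by rewrite -expr2 sqr_ge0 | by rewrite addr_ge0]. Qed.
Lemma cdot_real1 k (x : cd k) : cdot (creal k 1) x = cre x.
Proof.
elim: k x => [|k IH] /= x; first exact: mul1r.
rewrite IH; suff -> : forall y : cd k, cdot (czero R k) y = 0 by rewrite addr0.
by move=> y; rewrite -(cscale0 (czero R k)) cdot_scalel mul0r.
Qed.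
Lemma cre_cn k (x : cd k) : cre (cn x) = cdot x x.
Proof.
rewrite /cn; elim: k x => [|k IH] /= x; first by [].
by rewrite cre_add cre_opp cmul_oppr cre_opp opprK IH IH.
Qed.
Lemma cinnerE k (x y : cd k) : cinner x y = cdot x y.
Proof.
rewrite /cinner !cre_cn cdot_addl !cdot_addr (cdotC y x).
by field.
Qed.

End CD.

Section CI.
Variable R : realType.
Variable k : nat.
Variable I : cd R k.
Hypothesis hI : imag_unit I.
Local Notation e := (cone R k).
Definition phi' (a b : R) := cadd (cscale a e) (cscale b I).
Definition phi (w : R[i]) := let: (a +i* b)%C := w in phi' a b.
Definition psi (a : cd R k) : R[i] := (cinner a e +i* cinner a I)%C.

Lemma piIE a : piI I a = phi (psi a). Proof. by []. Qed.

Lemma cadd_eqN (x y : cd R k) : cadd x y = czero R k -> y = copp x.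
Proof.
move=> h; rewrite -[y]cadd0 -(caddN x) (caddC x) -caddA h caddz //.
Qed.
Lemma cconjI : cconj I = copp I.
Proof. by case: hI => /cadd_eqN. Qed.
Lemma cmulII : cmul I I = copp e.
Proof. by case: hI => _; rewrite /cn cconjI cmul_oppl => <-; rewrite coppK. Qed.
Lemma creI : cre I = 0.
Proof.
case: hI => /(congr1 (@cre R k)); rewrite cre_add cre_conj cre0 => /eqP.
by rewrite -mulr2n mulrn_eq0 /= => /eqP.
Qed.
Lemma cree : cre e = 1. Proof. exact: cre_real. Qed.
Lemma cdotee : cdot e e = 1. Proof. by rewrite cdot_real1 cree. Qed.
Lemma cdoteI : cdot e I = 0. Proof. by rewrite cdot_real1 creI. Qed.
Lemma cdotII : cdot I I = 1. Proof. by rewrite -cre_cn; case: hI => _ ->; rewrite cree. Qed.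
Lemma cmul1l (x : cd R k) : cmul e x = x. Proof. by rewrite cmul_reall cscale1. Qed.
Lemma cmul1r (x : cd R k) : cmul x e = x. Proof. by rewrite cmul_realr cscale1. Qed.

Lemma phi'_add a b c d : cadd (phi' a b) (phi' c d) = phi' (a + c) (b + d).
Proof. by rewrite /phi' cadd4 !cscaleD. Qed.
Lemma phi'_scale t a b : cscale t (phi' a b) = phi' (t * a) (t * b).
Proof. by rewrite /phi' cscale_add !cscaleM. Qed.
Lemma phi'_eq a b c d : a = c -> b = d -> phi' a b = phi' c d.
Proof. by move=> -> ->. Qed.
Lemma cmulI' c d : cmul I (phi' c d) = phi' (- d) c.
Proof.
rewrite /phi' cmul_addr !cmul_scaler cmul1r cmulII caddC; congr cadd.
by rewrite cscaleN copp_scale.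
Qed.
Lemma phi'_mul a b c d : cmul (phi' a b) (phi' c d) = phi' (a * c - b * d) (a * d + b * c).
Proof.
rewrite {1}/phi' cmul_addl !cmul_scalel cmul1l cmulI' !phi'_scale phi'_add.
by apply: phi'_eq; ring.
Qed.
Lemma phi'_conj a b : cconj (phi' a b) = phi' a (- b).
Proof.
by rewrite /phi' cconj_add !cconj_scale cconj_real cconjI cscaleN copp_scale.
Qed.
Lemma phi'_cn a b : cn (phi' a b) = phi' (a ^+ 2 + b ^+ 2) 0.
Proof. by rewrite /cn phi'_conj phi'_mul; apply: phi'_eq; ring. Qed.
Lemma phi'_cre a b : cre (phi' a b) = a.
Proof. by rewrite /phi' cre_add !cre_scale cree creI; ring. Qed.
Lemma phi'_cabs a b : cabs (phi' a b) = Num.sqrt (a ^+ 2 + b ^+ 2).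
Proof. by rewrite /cabs phi'_cn phi'_cre. Qed.
Lemma phi_cabs w : cabs (phi w) = Normc.normc w.
Proof. by case: w => a b; rewrite /phi phi'_cabs. Qed.

Lemma phi_add u v : phi (u + v) = cadd (phi u) (phi v).
Proof. by case: u => a b; case: v => c d; rewrite /phi phi'_add. Qed.
Lemma phi_mul u v : phi (u * v) = cmul (phi u) (phi v).
Proof. by case: u => a b; case: v => c d; rewrite /phi phi'_mul. Qed.
Lemma phi0 : phi 0 = czero R k.
Proof. by rewrite /phi /phi' /= !cscale0 cadd0. Qed.
Lemma phi1 : phi 1 = e.
Proof. by rewrite /phi /phi' /= cscale0 cscale1 caddz. Qed.
Lemma phi_scale (t : R) w : phi ((t%:C)%C * w) = cscale t (phi w).
Proof. by case: w => a b; rewrite /phi phi'_scale; apply: phi'_eq => /=; ring. Qed.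
Lemma phi_inj0 w : phi w = czero R k -> w = 0.
Proof.
case: w => a b; rewrite /phi /= => /(congr1 (fun x => cre (cn x))).
rewrite phi'_cn phi'_cre /cn cconj0 cmul0r cre0 => /eqP.
rewrite paddr_eq0 ?sqr_ge0 // !sqrf_eq0 => /andP[/eqP -> /eqP ->] //.
Qed.
Lemma phi_inj u v : phi u = phi v -> u = v.
Proof.
move=> h; apply/eqP; rewrite -subr_eq0; apply/eqP/phi_inj0.
rewrite phi_add h -phi_add subrr phi0 //.
Qed.

Lemma bessel a : Normc.normc (psi a) <= cabs a.
Proof.
rewrite /psi /= /cabs cre_cn !cinnerE ler_sqrt ?cdot_ge0 //.
set al := cdot a e; set be := cdot a I.
have := cdot_ge0 (cadd a (copp (phi' al be))).
rewrite !cdot_addl !cdot_addr !cdot_oppl.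
rewrite !cdot_oppr.
rewrite /phi' !cdot_addl !cdot_addr !cdot_scalel !cdot_scaler cdotee cdotII (cdotC I e) cdoteI.
rewrite -/al -/be (cdotC e a) (cdotC I a) -/al -/be.
move=> h; nra.
Qed.
End CI.

Section Real.
Variable R : realType.

Lemma cauchy_schwarz n (x y : 'I_n -> R) :
  (\sum_(j < n) x j * y j) ^+ 2 <= (\sum_(j < n) x j ^+ 2) * (\sum_(j < n) y j ^+ 2).
Proof.
elim: n x y => [|n IH] x y; first by rewrite !big_ord0 expr0n mul0r.
rewrite !big_ord_recr /=.
set S := \sum_(i < n) _; set X := \sum_(i < n) _; set Y := \sum_(i < n) _.
have hS : S ^+ 2 <= X * Y by exact: IH.
have hX : 0 <= X by apply: sumr_ge0 => i _; exact: sqr_ge0.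
have hY : 0 <= Y by apply: sumr_ge0 => i _; exact: sqr_ge0.
set a := x ord_max; set b := y ord_max.
have h1 : (2 * S * a * b) ^+ 2 <= (X * b ^+ 2 + Y * a ^+ 2) ^+ 2.
  have -> : (2 * S * a * b) ^+ 2 = 4 * (S ^+ 2) * (a ^+ 2 * b ^+ 2) by ring.
  have h2 : 4 * (S ^+ 2) * (a ^+ 2 * b ^+ 2) <= 4 * (X * Y) * (a ^+ 2 * b ^+ 2).
    by apply: ler_wpM2r; [rewrite mulr_ge0 ?sqr_ge0 | rewrite ler_wpM2l].
  apply: (le_trans h2).
  have -> : (X * b ^+ 2 + Y * a ^+ 2) ^+ 2 = 4 * (X * Y) * (a ^+ 2 * b ^+ 2) + (X * b ^+ 2 - Y * a ^+ 2) ^+ 2 by ring.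
  by rewrite lerDl sqr_ge0.
have h3 : 0 <= X * b ^+ 2 + Y * a ^+ 2 by apply: addr_ge0; apply: mulr_ge0 => //; exact: sqr_ge0.
have h4 : 2 * S * a * b <= X * b ^+ 2 + Y * a ^+ 2.
  move: h1 h3; set u := 2 * S * a * b; set W := X * b ^+ 2 + Y * a ^+ 2.
  move=> h1 h3; nra.
nra.
Qed.

Lemma real_bounds n (A : 'I_n -> R) (rho : R) : (0 < n)%N -> 0 <= rho ->
  (forall j, 0 <= A j) -> rho ^+ n <= \sum_(j < n) A j * rho ^+ j ->
  [/\ rho < Num.sqrt (1 + \sum_(j < n) A j ^+ 2),
      rho < 1 + \big[Num.max/0]_(j < n) A j &
      rho <= Num.max 1 (\sum_(j < n) A j)].
Proof.
move=> n0 rho0 A0 H.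
have geo : forall x : R, x ^+ n - 1 = (x - 1) * \sum_(j < n) x ^+ j by move=> x; exact: subrX1.
split.
- rewrite ltNge; apply/negP => hle.
  have hC : 0 <= \sum_(j < n) A j ^+ 2 by apply: sumr_ge0 => i _; exact: sqr_ge0.
  have h1 : 1 + \sum_(j < n) A j ^+ 2 <= rho ^+ 2.
    by rewrite -(sqr_sqrtr (_ : 0 <= 1 + _)) ?lerXn2r ?nnegrE ?sqrtr_ge0 // addr_ge0.
  have hP : 0 <= rho ^+ n by rewrite exprn_ge0.
  have h2 : (rho ^+ n) ^+ 2 <= (\sum_(j < n) A j * rho ^+ j) ^+ 2.
    by rewrite lerXn2r ?nnegrE // (le_trans hP H).
  have h3 := cauchy_schwarz A (fun j => rho ^+ j).
  have hG : 0 <= \sum_(j < n) (rho ^+ 2) ^+ j by apply: sumr_ge0 => i _; rewrite exprn_ge0 ?sqr_ge0.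
  have h4 : \sum_(j < n) (rho ^+ j) ^+ 2 = \sum_(j < n) (rho ^+ 2) ^+ j.
    by apply: eq_bigr => j _; rewrite exprAC.
  rewrite h4 in h3.
  have h5 := geo (rho ^+ 2).
  have h6 : (rho ^+ n) ^+ 2 = (rho ^+ 2) ^+ n by rewrite exprAC.
  set G := \sum_(j < n) (rho ^+ 2) ^+ j in hG h3 h5.
  set C := \sum_(j < n) A j ^+ 2 in hC h1 h3.
  have h7 : C * G <= (rho ^+ 2 - 1) * G by apply: ler_wpM2r => //; lra.
  nra.
- rewrite ltNge; apply/negP => hle.
  have h1 : forall j, A j <= rho - 1.
    move=> j; rewrite lerBrDl addrC; apply: le_trans _ hle.
    by rewrite addrC lerD2l; exact: (le_bigmax 0 A j).
  have h2 : \sum_(j < n) A j * rho ^+ j <= \sum_(j < n) (rho - 1) * rho ^+ j.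
    by apply: ler_sum => j _; rewrite ler_wpM2r ?exprn_ge0.
  rewrite -mulr_sumr -geo in h2.
  have := le_trans H h2; rewrite lerBrDl; lra.
- case: n A A0 H n0 geo => [//|n] A A0 H _ _.
  rewrite leNgt; apply/negP; rewrite gt_max => /andP[h1 hS].
  have h2 : \sum_(j < n.+1) A j * rho ^+ j <= \sum_(j < n.+1) A j * rho ^+ n.
    apply: ler_sum => j _; rewrite ler_wpM2l // ler_weXn2l ?(ltW h1) //.
    by rewrite -ltnS.
  rewrite -mulr_suml in h2.
  have hR : 0 < rho ^+ n by rewrite exprn_gt0 // (lt_trans ltr01 h1).
  have h3 : (\sum_(j < n.+1) A j) * rho ^+ n < rho * rho ^+ n by rewrite ltr_pM2r.
  have := le_trans H h2; rewrite exprS; lra.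
Qed.
End Real.

Section Main.
Variable R : realType.

Lemma normc_ge0 (w : R[i]) : 0 <= Normc.normc w.
Proof. by case: w => a b; exact: sqrtr_ge0. Qed.
Lemma normc_sum (s : seq nat) (F : nat -> R[i]) :
  Normc.normc (\sum_(j <- s) F j) <= \sum_(j <- s) Normc.normc (F j).
Proof.
elim: s => [|x s IH]; first by rewrite !big_nil Normc.normc0.
rewrite !big_cons; apply: le_trans (le_normcD _ _) _; exact: lerD.
Qed.
Lemma normc_sumI n (F : 'I_n -> R[i]) :
  Normc.normc (\sum_(j < n) F j) <= \sum_(j < n) Normc.normc (F j).
Proof.
elim: n F => [|n IH] F; first by rewrite !big_ord0 Normc.normc0.
rewrite !big_ord_recr /=; apply: le_trans (le_normcD _ _) _; exact: lerD.
Qed.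
Lemma normcX (w : R[i]) j : Normc.normc (w ^+ j) = Normc.normc w ^+ j.
Proof.
elim: j => [|j IH]; first by rewrite !expr0 Normc.normc1.
by rewrite !exprS Normc.normcM IH.
Qed.

Lemma convex_lt m (t c : 'I_m -> R) (B : R) : (forall i, c i < B) -> (forall i, 0 <= t i) ->
  \sum_(i < m) t i = 1 -> \sum_(i < m) t i * c i < B.
Proof.
move=> hc ht hs.
have hB : B = \sum_(i < m) t i * B by rewrite -mulr_suml hs mul1r.
rewrite [X in _ < X]hB -subr_gt0 -sumrB.
have [/existsP [i ti] | /existsPn H] := boolP [exists i, 0 < t i]; last first.
  move: hs; rewrite big1 => [/eqP|i _]; first by rewrite eq_sym oner_eq0.
  by apply/eqP; rewrite eq_le ht andbT leNgt; exact: H.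
rewrite (bigD1 i) //=; apply: (@lt_le_trans _ _ (t i * B - t i * c i)).
  by rewrite -mulrBr mulr_gt0 // subr_gt0.
rewrite lerDl; apply: sumr_ge0 => j _; rewrite -mulrBr mulr_ge0 // subr_ge0 ltW //.
Qed.
Lemma convex_le m (t c : 'I_m -> R) (B : R) : (forall i, c i <= B) -> (forall i, 0 <= t i) ->
  \sum_(i < m) t i = 1 -> \sum_(i < m) t i * c i <= B.
Proof.
move=> hc ht hs.
have hB : B = \sum_(i < m) t i * B by rewrite -mulr_suml hs mul1r.
rewrite [X in _ <= X]hB; apply: ler_sum => i _; exact: ler_wpM2l.
Qed.

Lemma normcR (t : R) : 0 <= t -> Normc.normc ((t%:C)%C : R[i]) = t.
Proof. by move=> t0; rewrite /= expr0n addr0 sqrtr_sqr ger0_norm. Qed.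

Lemma cpow_phi k (I : cd R k) (hI : imag_unit I) w j : cpow (phi I w) j = phi I (w ^+ j).
Proof.
elim: j => [|j IH]; first by rewrite /= -(phi1 I).
by rewrite /= IH -phi_mul // exprS.
Qed.
Lemma csum_phi k (I : cd R k) (s : seq nat) (F : nat -> R[i]) :
  csum [seq phi I (F j) | j <- s] = phi I (\sum_(j <- s) F j).
Proof.
elim: s => [|x s IH]; first by rewrite big_nil phi0.
by rewrite big_cons phi_add -IH.
Qed.
End Main.

Theorem lemma4p9 (R : realType) (k n : nat) (hn : (1 <= n)%N)
    (a : 'I_n -> cd R k) (r : cd R k) :
  snail (rcons [seq a j | j <- enum 'I_n] (cone R k)) r ->
  [/\ cabs r < Num.sqrt (1 + \sum_(j < n) cabs (a j) ^+ 2),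
      cabs r < 1 + \big[Num.max/0]_(j < n) cabs (a j) &
      cabs r <= Num.max 1 (\sum_(j < n) cabs (a j))].
Proof.
move=> [I [hI [K1 _]]].
set p := rcons [seq a j | j <- enum 'I_n] (cone R k).
have hsz : size p = n.+1 by rewrite size_rcons size_map size_enum_ord.
have hpn : nth (czero R k) p n = cone R k.
  by rewrite nth_rcons size_map size_enum_ord ltnn eqxx.
have hpj : forall j : 'I_n, nth (czero R k) p j = a j.
  move=> j; rewrite nth_rcons size_map size_enum_ord ltn_ord.
  by rewrite (nth_map j) ?size_enum_ord // nth_ord_enum.
have psi1 : psi I (cone R k) = 1.
  by rewrite /psi !cinnerE cdotee // cdoteI.
have nc : nonconst (polyI I p).
  exists n => //; rewrite /polyI (nth_map (czero R k)) ?hsz // hpn piIE psi1 phi1 //.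
  move/(congr1 (@cre R k)); rewrite cre_real cre0 => /eqP; by rewrite oner_eq0.
have [m [z [t [hz ht hsum hr]]]] := K1 nc.
have root_bound : forall w : R[i], ceval (polyI I p) (phi I w) = czero R k ->
  [/\ Normc.normc w < Num.sqrt (1 + \sum_(j < n) cabs (a j) ^+ 2),
      Normc.normc w < 1 + \big[Num.max/0]_(j < n) cabs (a j) &
      Normc.normc w <= Num.max 1 (\sum_(j < n) cabs (a j))].
  move=> w hw.
  have E : ceval (polyI I p) (phi I w) =
      phi I (\sum_(j <- iota 0 n.+1) psi I (nth (czero R k) p j) * w ^+ j).
    rewrite /ceval size_map hsz -csum_phi; congr csum.
    apply/eq_in_map => j; rewrite mem_iota add0n => /andP[_ hj].
    by rewrite (nth_map (czero R k)) ?hsz // piIE cpow_phi // phi_mul.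
  have hw0 := phi_inj0 hI (etrans (esym E) hw).
  move: hw0; rewrite -[iota 0 n.+1]/(index_iota 0 n.+1) big_mkord big_ord_recr /= hpn psi1 mul1r.
  under eq_bigr do rewrite hpj.
  move/eqP; rewrite addr_eq0 => /eqP hwn.
  apply: (real_bounds (A := fun j => cabs (a j))) => //.
  - exact: normc_ge0.
  - move=> j; exact: sqrtr_ge0.
  - rewrite -normcX -normcN -hwn; apply: le_trans (normc_sumI _) _.
    apply: ler_sum => j _; rewrite Normc.normcM normcX ler_wpM2r ?exprn_ge0 ?normc_ge0 //.
    exact: bessel.
have conv : forall s : seq 'I_m, exists W, csum [seq cscale (t i) (z i) | i <- s] = phi I W /\
    Normc.normc W <= \sum_(i <- s) t i * cabs (z i).
  elim => [|i s [W [hW hWn]]]; first by exists 0; rewrite big_nil phi0 Normc.normc0.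
  have [[x [y hxy]] _] := hz i.
  have hzi : z i = phi I (x +i* y)%C by rewrite hxy /phi /phi' cscale_real mulr1.
  exists (((t i)%:C)%C * (x +i* y)%C + W); split.
    by rewrite /= hW hzi phi_add phi_scale.
  rewrite big_cons; apply: le_trans (le_normcD _ _) _; apply: lerD => //.
  by rewrite Normc.normcM hzi phi_cabs // normcR.
have [W [hW hWn]] := conv (enum 'I_m).
rewrite enumT in hWn.
have hr' : cabs r = Normc.normc W by rewrite hr hW phi_cabs.
have hc : forall i, [/\ cabs (z i) < Num.sqrt (1 + \sum_(j < n) cabs (a j) ^+ 2),
      cabs (z i) < 1 + \big[Num.max/0]_(j < n) cabs (a j) &
      cabs (z i) <= Num.max 1 (\sum_(j < n) cabs (a j))].
  move=> i; have [[x [y hxy]] hroot] := hz i.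
  have hzi : z i = phi I (x +i* y)%C by rewrite hxy /phi /phi' cscale_real mulr1.
  by rewrite hzi phi_cabs //; apply: root_bound; rewrite -hzi.
rewrite hr'; split.
- apply: le_lt_trans hWn _; apply: convex_lt => // i; by case: (hc i).
- apply: le_lt_trans hWn _; apply: convex_lt => // i; by case: (hc i).
- apply: le_trans hWn _; apply: convex_le => // i; by case: (hc i).
Qed.
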